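(* Let $C,D,E$ be category presentations and $P:C\nrightarrow D$, $Q:D\nrightarrow E$ curried profunctor presentations. There is an isomorphism of profunctors $\mu^{P,Q}:[\![P]\!]\odot[\![Q]\!]\to[\![P\circledast Q]\!]$ in $\mathbf{Prof}([\![C]\!],[\![E]\!])$, given on components by $\langle[s],[t]\rangle\mapsto[s\otimes t]$ for terms $s:d$ of $P(c)$ and $t:e$ of $Q(d)$, which is natural in $P\in\mathbf{Curr}(C,D)$ and $Q\in\mathbf{Curr}(D,E)$. Furthermore, if $P$ and $Q$ are finite then $P\circledast Q$ is finite. In particular, if $\mathcal P:[\![C]\!]\nrightarrow[\![D]\!]$ and $\mathcal Q:[\![D]\!]\nrightarrow[\![E]\!]$ are finitely curried presentable, then so is $\mathcal P\odot\mathcal Q$.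
   Context: Category presentations $C$: sorts, function symbols $f:c\to c'$, equations $C_E$ between parallel paths (paths: composable lists $f_1.\cdots.f_n$ or empty $1_c$); finite if all these sets are finite. $\approx_C$: smallest equivalence relation on paths containing $C_E$ closed under concatenation with composable function symbols. $[\![C]\!]$: objects the sorts, morphisms $\approx_C$-classes $[p]$. Profunctors: $\mathcal P:\mathcal C\nrightarrow\mathcal D$ is a functor $\mathcal C^{op}\times\mathcal D\to\mathbf{Set}$ (equivalently a category over $\mathbf 2=\{0\to1\}$ with fibres $\mathcal C,\mathcal D$); $\mathbf{Prof}(\mathcal C,\mathcal D)$ has natural transformations as morphisms. Composition: $(\mathcal P\odot\mathcal Q)(c,e)$ is $\coprod_{d}\mathcal P(c,d)\times\mathcal Q(d,e)$ modulo the equivalence relation generated by $(p,\mathcal Q(g,1)(q'))\sim(\mathcal P(1,g)(p),q')$ for $g:d\to d'$ in $\mathcal D$, $p\in\mathcal P(c,d)$, $q'\in\mathcal Q(d',e)$; the class of $(p,q)$ is $\langle p,q\rangle$; $(\mathcal P\odot\mathcal Q)(f,h)\langle p,q\rangle=\langle\mathcal P(f,1)p,\mathcal Q(1,h)q\rangle$. Instance presentations: a $D$-instance presentation $I$ has generators $x:d$ and equations $I_E$ between terms $x.g$ ($g$ a $D$-path); finite if generators and equations are finite. $\approx_I$: smallest equivalence relation on terms containing $I_E$, closed under right concatenation with $D$-function symbols, identifying $t.p$ and $t.q$ for every equation $p=q$ of $D_E$. $[\![I]\!]:[\![D]\!]\to\mathbf{Set}$ sends $d$ to $\approx_I$-classes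 of terms of type $d$, $[g]$ acting by $[t]\mapsto[t.g]$. A morphism $F:I\to J$ sends generators $x:d$ to terms $F(x):d$ with $F(x).g\approx_J F(y).h$ for every equation $x.g=y.h$ in $I_E$; $F(x.g):=F(x).g$; $F\approx G$ iff $F(x)\approx_J G(x)$ for all $x$. Curried presentations: $P:C\nrightarrow D$ assigns a $D$-instance presentation $P(c)$ to each sort $c$ and a $D$-instance morphism $P(f):P(c')\to P(c)$ to each function symbol $f:c\to c'$, with $P(p)\approx P(p')$ for each equation $p=p'$ of $C_E$, where $P(f_1.\cdots.f_n):=P(f_n)\circ\cdots\circ P(f_1)$. Finite if $C,D$ and all $P(c)$ are finite. Morphisms $F:P\to P'$: families of $D$-instance morphisms $F_c:P(c)\to P'(c)$ with $F_c\circ P(f)\approx P'(f)\circ F_{c'}$ for each function symbol $f:c\to c'$; category $\mathbf{Curr}(C,D)$. Semantics: $[\![P]\!](c,d)=[\![P(c)]\!](d)$, with $[f]$ acting by $[t]\mapsto[P(f)(t)]$ and $[g]$ by $[t]\mapsto[t.g]$; on morphisms $[\![F]\!]_{(c,d)}[t]=[F_c(t)]$. A profunctor is finitely curried presentable if it is isomorphic to $[\![P]\!]$ for a finite curried $P$. Composite: for $P:C\nrightarrow D$, $Q:D\nrightarrow E$ and sort $c$, $(P\circledast Q)(c)$ is the $E$-instance presentation with generators $p\otimes q:e$ ($p:d$ generator of $P(c)$, $q:e$ generator of $Q(d)$); $\otimes$ extends to terms by $p\otimes(q.h):=(p\otimes q).h$ and $(p.g)\otimes t:=p\otimes Q(g)(t)$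 ($p:d'$, $g:d'\to d$); equations: $s\otimes q=s'\otimes q$ for each equation $s=s':d$ of $P(c)$ and generator $q:e$ of $Q(d)$, and $p\otimes t=p\otimes t'$ for each generator $p:d$ of $P(c)$ and equation $t=t'$ of $Q(d)$. $(P\circledast Q)(f)(p\otimes q):=P(f)(p)\otimes q$. On morphisms, $(\phi\circledast\psi)_c(p\otimes q):=\phi_c(p)\otimes\psi_d(q)$. *)

(* Defs.v *)
From Stdlib Require Import List ClassicalEpsilon Relation_Operators.

(* Generic typed paths  f_1 . ... . f_n  (diagrammatic order) or 1_c. *)
Inductive gpath {S F : Type} (dom cod : F -> S) : S -> S -> Type :=
| gnil : forall c : S, gpath dom cod c c
| gcons : forall (f : F) (c' : S), gpath dom cod (cod f) c' -> gpath dom cod (dom f) c'.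
Arguments gnil {S F dom cod} c.
Arguments gcons {S F dom cod} f {c'} _.

Record CatPres := {
  sort : Type;
  fsym : Type;
  fdom : fsym -> sort;
  fcod : fsym -> sort;
  ceq : Type;
  ceq_src : ceq -> sort;
  ceq_tgt : ceq -> sort;
  ceq_lhs : forall e, gpath fdom fcod (ceq_src e) (ceq_tgt e);
  ceq_rhs : forall e, gpath fdom fcod (ceq_src e) (ceq_tgt e) }.

Definition Path (C : CatPres) : sort C -> sort C -> Type := gpath (fdom C) (fcod C).

Fixpoint pcat {C : CatPres} {a b c : sort C} (p : Path C a b) : Path C b c -> Path C a c :=
  match p in gpath _ _ a b return Path C b c -> Path C a c with
  | gnil _ => fun q => q
  | gcons f p' => fun q => gcons f (pcat p' q)
  end.

Definition psym (C : CatPres) (f : fsym C) : Path C (fdom C f) (fcod C f) :=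
  gcons f (gnil (fcod C f)).

Inductive peq (C : CatPres) : forall c c' : sort C, Path C c c' -> Path C c c' -> Prop :=
| peq_ax : forall e, peq C _ _ (ceq_lhs C e) (ceq_rhs C e)
| peq_refl : forall c c' (p : Path C c c'), peq C c c' p p
| peq_sym : forall c c' (p q : Path C c c'), peq C c c' p q -> peq C c c' q p
| peq_trans : forall c c' (p q r : Path C c c'),
    peq C c c' p q -> peq C c c' q r -> peq C c c' p r
| peq_pre : forall f c' (p q : Path C (fcod C f) c'),
    peq C _ c' p q -> peq C _ c' (gcons f p) (gcons f q)
| peq_post : forall c f (p q : Path C c (fdom C f)),
    peq C c _ p q -> peq C c _ (pcat p (psym C f)) (pcat q (psym C f)).

Definition quot {T : Type} (R : T -> T -> Prop) : Type :=
  { A : T -> Prop | exists x, A = R x }.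
Definition cls {T : Type} (R : T -> T -> Prop) (x : T) : quot R :=
  exist _ (R x) (ex_intro _ x eq_refl).
Definition rep {T : Type} {R : T -> T -> Prop} (q : quot R) : T :=
  proj1_sig (constructive_indefinite_description _ (proj2_sig q)).

(* Morphisms of [[C]] : ≈_C-classes of paths; identities and composition *)
Definition Hom (C : CatPres) (c c' : sort C) : Type := quot (peq C c c').
Definition hid (C : CatPres) (c : sort C) : Hom C c c := cls _ (gnil c).
Definition hcomp {C : CatPres} {a b c : sort C} (f : Hom C a b) (g : Hom C b c) : Hom C a c :=
  cls _ (pcat (rep f) (rep g)).

Record InstPres (D : CatPres) := {
  gen : Type;
  gsort : gen -> sort D;
  ieq : Type;
  ieq_sort : ieq -> sort D;
  ieq_lhs : forall e, { x : gen & Path D (gsort x) (ieq_sort e) };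
  ieq_rhs : forall e, { x : gen & Path D (gsort x) (ieq_sort e) } }.
Arguments gen {D}.
Arguments gsort {D}.
Arguments ieq {D}.
Arguments ieq_sort {D}.
Arguments ieq_lhs {D}.
Arguments ieq_rhs {D}.

Definition term {D : CatPres} (I : InstPres D) (d : sort D) : Type :=
  { x : gen I & Path D (gsort I x) d }.
Definition tcat {D : CatPres} {I : InstPres D} {d d' : sort D}
  (t : term I d) (g : Path D d d') : term I d' :=
  existT _ (projT1 t) (pcat (projT2 t) g).
Definition gterm {D : CatPres} (I : InstPres D) (x : gen I) : term I (gsort I x) :=
  existT _ x (gnil _).

Inductive teq {D : CatPres} (I : InstPres D) : forall d : sort D, term I d -> term I d -> Prop :=
| teq_ax : forall e, teq I _ (ieq_lhs I e) (ieq_rhs I e)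
| teq_refl : forall d (t : term I d), teq I d t t
| teq_sym : forall d (s t : term I d), teq I d s t -> teq I d t s
| teq_trans : forall d (s t u : term I d), teq I d s t -> teq I d t u -> teq I d s u
| teq_rcat : forall f (s t : term I (fdom D f)),
    teq I _ s t -> teq I _ (tcat s (psym D f)) (tcat t (psym D f))
| teq_deq : forall e (t : term I (ceq_src D e)),
    teq I _ (tcat t (ceq_lhs D e)) (tcat t (ceq_rhs D e)).

Definition RawMor {D : CatPres} (I J : InstPres D) : Type :=
  forall x : gen I, term J (gsort I x).
Definition tapp {D : CatPres} {I J : InstPres D} (F : RawMor I J) {d : sort D}
  (t : term I d) : term J d := tcat (F (projT1 t)) (projT2 t).
Definition is_mor {D : CatPres} {I J : InstPres D} (F : RawMor I J) : Prop :=
  forall e : ieq I, teq J _ (tapp F (ieq_lhs I e)) (tapp F (ieq_rhs I e)).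
Definition mor_equiv {D : CatPres} {I J : InstPres D} (F G : RawMor I J) : Prop :=
  forall x, teq J _ (F x) (G x).
Definition mid {D : CatPres} (I : InstPres D) : RawMor I I := fun x => gterm I x.
Definition mcomp {D : CatPres} {I J K : InstPres D} (G : RawMor J K) (F : RawMor I J) :
  RawMor I K := fun x => tapp G (F x).

Record Curr (C D : CatPres) := {
  Pob : sort C -> InstPres D;
  Pmor : forall f : fsym C, RawMor (Pob (fcod C f)) (Pob (fdom C f)) }.
Arguments Pob {C D}.
Arguments Pmor {C D}.

(* P(f_1. ... .f_n) : P(c') -> P(c), applying P(f_n) first and P(f_1) last *)
Fixpoint Ppath {C D : CatPres} (P : Curr C D) {c c' : sort C} (p : Path C c c') :
  RawMor (Pob P c') (Pob P c) :=
  match p in gpath _ _ c c' return RawMor (Pob P c') (Pob P c) with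
  | gnil c => mid (Pob P c)
  | gcons f p' => mcomp (Pmor P f) (Ppath P p')
  end.

Definition is_curr {C D : CatPres} (P : Curr C D) : Prop :=
  (forall f, is_mor (Pmor P f)) /\
  (forall e : ceq C, mor_equiv (Ppath P (ceq_lhs C e)) (Ppath P (ceq_rhs C e))).

Definition CurrMor {C D : CatPres} (P P' : Curr C D) : Type :=
  forall c, RawMor (Pob P c) (Pob P' c).
Definition is_curr_mor {C D : CatPres} {P P' : Curr C D} (F : CurrMor P P') : Prop :=
  (forall c, is_mor (F c)) /\
  (forall f : fsym C,
     mor_equiv (mcomp (F (fdom C f)) (Pmor P f)) (mcomp (Pmor P' f) (F (fcod C f)))).

Definition finite_type (T : Type) : Prop := exists l : list T, forall x, In x l.
Definition finite_cat (C : CatPres) : Prop :=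
  finite_type (sort C) /\ finite_type (fsym C) /\ finite_type (ceq C).
Definition finite_inst {D : CatPres} (I : InstPres D) : Prop :=
  finite_type (gen I) /\ finite_type (ieq I).
Definition finite_curr {C D : CatPres} (P : Curr C D) : Prop :=
  finite_cat C /\ finite_cat D /\ forall c, finite_inst (Pob P c).

Section Composite.
Context {D E : CatPres} (I : InstPres D) (Q : Curr D E).

Definition CGen : Type := { p : gen I & gen (Pob Q (gsort I p)) }.
Definition cgsort (x : CGen) : sort E := gsort (Pob Q (gsort I (projT1 x))) (projT2 x).

(* s ⊗ t, with (p.g) ⊗ t := p ⊗ Q(g)(t) and p ⊗ (q.h) := (p ⊗ q).h *)
Definition tens {d : sort D} {e : sort E} (s : term I d) (t : term (Pob Q d) e) :
  { x : CGen & Path E (cgsort x) e } :=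
  let u := tapp (Ppath Q (projT2 s)) t in
  existT (fun x : CGen => Path E (cgsort x) e) (existT _ (projT1 s) (projT1 u)) (projT2 u).

Definition CIeq : Type :=
  ({ e : ieq I & gen (Pob Q (ieq_sort I e)) } + { p : gen I & ieq (Pob Q (gsort I p)) })%type.

Definition cieq_sort (x : CIeq) : sort E :=
  match x with
  | inl (existT _ e q) => gsort (Pob Q (ieq_sort I e)) q
  | inr (existT _ p e') => ieq_sort (Pob Q (gsort I p)) e'
  end.

Definition cieq_lhs (x : CIeq) : { y : CGen & Path E (cgsort y) (cieq_sort x) } :=
  match x as x0 return { y : CGen & Path E (cgsort y) (cieq_sort x0) } with
  | inl (existT _ e q) => tens (ieq_lhs I e) (gterm _ q)
  | inr (existT _ p e') => tens (gterm I p) (ieq_lhs _ e')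
  end.

Definition cieq_rhs (x : CIeq) : { y : CGen & Path E (cgsort y) (cieq_sort x) } :=
  match x as x0 return { y : CGen & Path E (cgsort y) (cieq_sort x0) } with
  | inl (existT _ e q) => tens (ieq_rhs I e) (gterm _ q)
  | inr (existT _ p e') => tens (gterm I p) (ieq_rhs _ e')
  end.

Definition CompInst : InstPres E :=
  {| gen := CGen; gsort := cgsort; ieq := CIeq; ieq_sort := cieq_sort;
     ieq_lhs := cieq_lhs; ieq_rhs := cieq_rhs |}.
End Composite.

Definition CompCurr {C D E : CatPres} (P : Curr C D) (Q : Curr D E) : Curr C E :=
  {| Pob := fun c => CompInst (Pob P c) Q;
     Pmor := fun f (x : CGen (Pob P (fcod C f)) Q) =>
       tens (Pob P (fdom C f)) Q (Pmor P f (projT1 x)) (gterm _ (projT2 x)) |}.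

Definition CompMor {C D E : CatPres} {P P' : Curr C D} {Q Q' : Curr D E}
  (phi : CurrMor P P') (psi : CurrMor Q Q') : CurrMor (CompCurr P Q) (CompCurr P' Q') :=
  fun c (x : CGen (Pob P c) Q) =>
    tens (Pob P' c) Q' (phi c (projT1 x)) (psi (gsort (Pob P c) (projT1 x)) (projT2 x)).

(* Profunctors [[C]]^op x [[D]] -> Set *)
Record Prof (C D : CatPres) := {
  pobj : sort C -> sort D -> Type;
  lact : forall c c' d, Hom C c c' -> pobj c' d -> pobj c d;
  ract : forall c d d', Hom D d d' -> pobj c d -> pobj c d' }.
Arguments pobj {C D}.
Arguments lact {C D} _ {c c' d}.
Arguments ract {C D} _ {c d d'}.

Definition is_prof {C D : CatPres} (P : Prof C D) : Prop :=
  (forall c d (x : pobj P c d), lact P (hid C c) x = x) /\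
  (forall c d (x : pobj P c d), ract P (hid D d) x = x) /\
  (forall a b c d (f : Hom C a b) (g : Hom C b c) (x : pobj P c d),
      lact P (hcomp f g) x = lact P f (lact P g x)) /\
  (forall c a b d (f : Hom D a b) (g : Hom D b d) (x : pobj P c a),
      ract P (hcomp f g) x = ract P g (ract P f x)) /\
  (forall c c' d d' (f : Hom C c c') (g : Hom D d d') (x : pobj P c' d),
      lact P f (ract P g x) = ract P g (lact P f x)).

Definition ProfMor {C D : CatPres} (P Q : Prof C D) : Type :=
  forall c d, pobj P c d -> pobj Q c d.
Definition is_nat {C D : CatPres} {P Q : Prof C D} (eta : ProfMor P Q) : Prop :=
  (forall c c' d (f : Hom C c c') (x : pobj P c' d),
      eta c d (lact P f x) = lact Q f (eta c' d x)) /\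
  (forall c d d' (g : Hom D d d') (x : pobj P c d),
      eta c d' (ract P g x) = ract Q g (eta c d x)).
Definition is_iso {C D : CatPres} {P Q : Prof C D} (eta : ProfMor P Q) : Prop :=
  is_nat eta /\
  exists inv : ProfMor Q P, is_nat inv /\
    (forall c d x, inv c d (eta c d x) = x) /\ (forall c d y, eta c d (inv c d y) = y).

Inductive CompStep {C D E : CatPres} (P : Prof C D) (Q : Prof D E) (c : sort C) (e : sort E) :
  { d : sort D & (pobj P c d * pobj Q d e)%type } ->
  { d : sort D & (pobj P c d * pobj Q d e)%type } -> Prop :=
| cstep : forall d d' (g : Hom D d d') (p : pobj P c d) (q' : pobj Q d' e),
    CompStep P Q c e (existT _ d (p, lact Q g q')) (existT _ d' (ract P g p, q')).

Definition CompRel {C D E : CatPres} (P : Prof C D) (Q : Prof D E) (c : sort C) (e : sort E) :=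
  clos_refl_sym_trans _ (CompStep P Q c e).

Definition ProfComp {C D E : CatPres} (P : Prof C D) (Q : Prof D E) : Prof C E :=
  {| pobj := fun c e => quot (CompRel P Q c e);
     lact := fun c c' e f z =>
       let w := rep z in
       cls (CompRel P Q c e) (existT _ (projT1 w) (lact P f (fst (projT2 w)), snd (projT2 w)));
     ract := fun c e e' h z =>
       let w := rep z in
       cls (CompRel P Q c e') (existT _ (projT1 w) (fst (projT2 w), ract Q h (snd (projT2 w)))) |}.

Definition pcls {C D E : CatPres} (P : Prof C D) (Q : Prof D E) {c : sort C} {d : sort D}
  {e : sort E} (p : pobj P c d) (q : pobj Q d e) : pobj (ProfComp P Q) c e :=
  cls (CompRel P Q c e) (existT _ d (p, q)).

Definition hcompMor {C D E : CatPres} {P P' : Prof C D} {Q Q' : Prof D E}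
  (al : ProfMor P P') (be : ProfMor Q Q') : ProfMor (ProfComp P Q) (ProfComp P' Q') :=
  fun c e z =>
    let w := rep z in
    cls (CompRel P' Q' c e)
        (existT _ (projT1 w) (al c _ (fst (projT2 w)), be _ e (snd (projT2 w)))).

Definition SemProf {C D : CatPres} (P : Curr C D) : Prof C D :=
  {| pobj := fun c d => quot (teq (Pob P c) d);
     lact := fun c c' d f z => cls (teq (Pob P c) d) (tapp (Ppath P (rep f)) (rep z));
     ract := fun c d d' g z => cls (teq (Pob P c) d') (tcat (rep z) (rep g)) |}.

Definition SemMor {C D : CatPres} {P P' : Curr C D} (F : CurrMor P P') :
  ProfMor (SemProf P) (SemProf P') :=
  fun c d z => cls (teq (Pob P' c) d) (tapp (F c) (rep z)).

Definition mu {C D E : CatPres} (P : Curr C D) (Q : Curr D E) :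
  ProfMor (ProfComp (SemProf P) (SemProf Q)) (SemProf (CompCurr P Q)) :=
  fun c e z =>
    let w := rep z in
    cls (teq (Pob (CompCurr P Q) c) e)
        (tens (Pob P c) Q (rep (fst (projT2 w))) (rep (snd (projT2 w)))).

Definition fin_curr_presentable {C D : CatPres} (PP : Prof C D) : Prop :=
  exists R : Curr C D, is_curr R /\ finite_curr R /\
    exists eta : ProfMor (SemProf R) PP, is_iso eta.

(* Main.v *)
Require Import Defs.
From Stdlib Require Import List ClassicalEpsilon Relation_Operators FunctionalExtensionality PropExtensionality ProofIrrelevance.

Lemma quot_eq {T} {R : T -> T -> Prop} (q1 q2 : quot R) :
  proj1_sig q1 = proj1_sig q2 -> q1 = q2.
Proof. destruct q1, q2; simpl; intros ->; f_equal; apply proof_irrelevance. Qed.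

Lemma cls_rep {T} {R : T->T->Prop} (q : quot R) : cls R (rep q) = q.
Proof.
  apply quot_eq. unfold rep.
  destruct (constructive_indefinite_description _ (proj2_sig q)) as [x Hx].
  simpl. symmetry; exact Hx.
Qed.

Lemma quot_ex {T} {R : T->T->Prop} (q : quot R) : exists x, q = cls R x.
Proof. exists (rep q). symmetry; apply cls_rep. Qed.

Record equivR {T} (R : T -> T -> Prop) : Prop := {
  eq_refl' : forall x, R x x;
  eq_sym' : forall x y, R x y -> R y x;
  eq_trans' : forall x y z, R x y -> R y z -> R x z }.

Lemma cls_eq {T} {R : T->T->Prop} (HR : equivR R) x y : R x y -> cls R x = cls R y.
Proof.
  intro H. apply quot_eq. simpl. extensionality z. apply propositional_extensionality.
  destruct HR as [r s t]. split; intro; eauto.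
Qed.

Lemma cls_inj {T} {R : T->T->Prop} (HR : equivR R) x y : cls R x = cls R y -> R x y.
Proof.
  intro H. apply (f_equal (@proj1_sig _ _)) in H. simpl in H.
  rewrite H. apply (eq_refl' _ HR).
Qed.

Lemma rep_cls {T} {R : T->T->Prop} (HR : equivR R) x : R (rep (cls R x)) x.
Proof.
  apply cls_inj; auto. apply cls_rep.
Qed.

Lemma pcat_nil_r {C : CatPres} {a b} (p : Path C a b) : pcat p (gnil b) = p.
Proof. induction p as [c|f c' p IH]; simpl; [reflexivity| now rewrite IH]. Qed.

Lemma pcat_assoc {C : CatPres} {a b c d} (p : Path C a b) (q : Path C b c) (r : Path C c d) :
  pcat (pcat p q) r = pcat p (pcat q r).
Proof. induction p as [x|f c' p IH]; simpl; [reflexivity| now rewrite IH]. Qed.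

Lemma peq_equiv (C : CatPres) c c' : equivR (peq C c c').
Proof. split; eauto using peq. Qed.

Lemma teq_equiv {D : CatPres} (I : InstPres D) d : equivR (teq I d).
Proof. split; eauto using teq. Qed.

Lemma tcat_nil {D : CatPres} {I : InstPres D} {d} (t : term I d) : tcat t (gnil d) = t.
Proof. destruct t as [x g]. unfold tcat; simpl. now rewrite pcat_nil_r. Qed.

Lemma tcat_tcat {D : CatPres} {I : InstPres D} {a b c} (t : term I a) (p : Path D a b) (q : Path D b c) :
  tcat (tcat t p) q = tcat t (pcat p q).
Proof. destruct t as [x g]. unfold tcat; simpl. now rewrite pcat_assoc. Qed.

Lemma tapp_tcat {D : CatPres} {I J : InstPres D} (F : RawMor I J) {a b} (t : term I a) (p : Path D a b) :
  tapp F (tcat t p) = tcat (tapp F t) p.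
Proof. destruct t as [x g]. exact (eq_sym (tcat_tcat (F x) g p)). Qed.

Lemma tapp_mcomp {D : CatPres} {I J K : InstPres D} (G : RawMor J K) (F : RawMor I J) {d} (t : term I d) :
  tapp (mcomp G F) t = tapp G (tapp F t).
Proof. destruct t as [x g]. unfold tapp at 1 3. unfold mcomp. simpl. symmetry. apply tapp_tcat. Qed.

Lemma tapp_mid {D : CatPres} {I : InstPres D} {d} (t : term I d) : tapp (mid I) t = t.
Proof. destruct t; reflexivity. Qed.

Lemma tapp_gterm {D : CatPres} {I J : InstPres D} (F : RawMor I J) x : tapp F (gterm I x) = F x.
Proof. unfold tapp; simpl. apply tcat_nil. Qed.

Lemma Ppath_pcat {C D : CatPres} (P : Curr C D) {a b c} (p : Path C a b) (q : Path C b c) {d} (t : term (Pob P c) d) :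
  tapp (Ppath P (pcat p q)) t = tapp (Ppath P p) (tapp (Ppath P q) t).
Proof.
  induction p as [x|f c' p IH]; simpl.
  - now rewrite tapp_mid.
  - rewrite !tapp_mcomp. now rewrite IH.
Qed.

Lemma Ppath_psym {C D : CatPres} (P : Curr C D) f {d} (t : term (Pob P (fcod C f)) d) :
  tapp (Ppath P (psym C f)) t = tapp (Pmor P f) t.
Proof. unfold psym; simpl. rewrite tapp_mcomp, tapp_mid. reflexivity. Qed.

Lemma teq_tcat {D : CatPres} {I : InstPres D} {a b} (p : Path D a b) :
  forall s t : term I a, teq I a s t -> teq I b (tcat s p) (tcat t p).
Proof.
  induction p as [x|f c' p IH]; intros s t H.
  - now rewrite !tcat_nil.
  - change (gcons f p) with (pcat (psym D f) p). rewrite <- !tcat_tcat.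
    apply IH. apply teq_rcat. exact H.
Qed.

Lemma teq_peq {D : CatPres} {I : InstPres D} :
  forall c c' (p q : Path D c c'), peq D c c' p q -> forall s : term I c, teq I c' (tcat s p) (tcat s q).
Proof.
  intros c c' p q H. induction H; intros s.
  - apply teq_deq.
  - apply teq_refl.
  - apply teq_sym; auto.
  - eapply teq_trans; eauto.
  - change (gcons f p) with (pcat (psym D f) p). change (gcons f q) with (pcat (psym D f) q).
    rewrite <- !tcat_tcat. apply IHpeq.
  - rewrite <- !tcat_tcat. apply teq_rcat. apply IHpeq.
Qed.

Lemma tapp_teq {D : CatPres} {I J : InstPres D} (F : RawMor I J) :
  is_mor F -> forall d (s t : term I d), teq I d s t -> teq J d (tapp F s) (tapp F t).
Proof.
  intros HF d s t H. induction H.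
  - apply HF.
  - apply teq_refl.
  - apply teq_sym; auto.
  - eapply teq_trans; eauto.
  - rewrite !tapp_tcat. apply teq_rcat; auto.
  - rewrite !tapp_tcat. apply teq_deq.
Qed.

Lemma tapp_mor_equiv {D : CatPres} {I J : InstPres D} (F G : RawMor I J) :
  mor_equiv F G -> forall d (t : term I d), teq J d (tapp F t) (tapp G t).
Proof. intros H d [x g]. unfold tapp; simpl. apply teq_tcat. apply H. Qed.

Lemma Ppath_teq {C D : CatPres} (P : Curr C D) : is_curr P ->
  forall c c' (p : Path C c c') d (s t : term (Pob P c') d),
  teq _ d s t -> teq _ d (tapp (Ppath P p) s) (tapp (Ppath P p) t).
Proof.
  intros HP c c' p. induction p as [x|f c' p IH]; intros d s t H; simpl.
  - now rewrite !tapp_mid.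
  - rewrite !tapp_mcomp. apply tapp_teq; [apply HP|]. auto.
Qed.

Lemma Ppath_peq {C D : CatPres} (P : Curr C D) : is_curr P ->
  forall c c' (p q : Path C c c'), peq C c c' p q ->
  forall d (t : term (Pob P c') d), teq _ d (tapp (Ppath P p) t) (tapp (Ppath P q) t).
Proof.
  intros HP c c' p q H. induction H; intros d t.
  - apply tapp_mor_equiv. apply HP.
  - apply teq_refl.
  - apply teq_sym; auto.
  - eapply teq_trans; eauto.
  - simpl. rewrite !tapp_mcomp. apply tapp_teq; [apply HP|]. auto.
  - rewrite !Ppath_pcat. auto.
Qed.

Lemma sigT_eta {A} {B : A -> Type} (u : {a : A & B a}) : existT B (projT1 u) (projT2 u) = u.
Proof. destruct u; reflexivity. Qed.

Section Tens.
Context {D E : CatPres} (I : InstPres D) (Q : Curr D E).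

Definition emb (p : gen I) {e} (u : term (Pob Q (gsort I p)) e) : term (CompInst I Q) e :=
  existT (fun x : CGen I Q => Path E (cgsort I Q x) e) (existT _ p (projT1 u)) (projT2 u).

Lemma tens_emb {d e} (s : term I d) (t : term (Pob Q d) e) :
  tens I Q s t = emb (projT1 s) (tapp (Ppath Q (projT2 s)) t).
Proof. reflexivity. Qed.

Lemma tens_gterm p {e} (t : term (Pob Q (gsort I p)) e) : tens I Q (gterm I p) t = emb p t.
Proof. destruct t; reflexivity. Qed.

Lemma tens_tcat_r {d e e'} (s : term I d) (t : term (Pob Q d) e) (k : Path E e e') :
  tens I Q s (tcat t k) = @tcat E (CompInst I Q) _ _ (tens I Q s t) k.
Proof. unfold tens. rewrite tapp_tcat. reflexivity. Qed.

Lemma tens_tcat_l {d d' e} (s : term I d) (g : Path D d d') (t : term (Pob Q d') e) :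
  tens I Q (tcat s g) t = tens I Q s (tapp (Ppath Q g) t).
Proof. destruct s as [x h]. unfold tens, tcat. cbn [projT1 projT2]. rewrite Ppath_pcat. reflexivity. Qed.

Lemma emb_teq p e (u u' : term (Pob Q (gsort I p)) e) :
  teq _ e u u' -> teq (CompInst I Q) e (emb p u) (emb p u').
Proof.
  intro H. induction H as [ex| | | | |].
  - exact (teq_ax (CompInst I Q) (inr (existT _ p ex))).
  - apply teq_refl.
  - apply teq_sym; auto.
  - eapply teq_trans; eauto.
  - exact (teq_rcat (CompInst I Q) f _ _ IHteq).
  - exact (teq_deq (CompInst I Q) e (emb p t)).
Qed.

Hypothesis HQ : is_curr Q.

Lemma tens_cong_r {d e} (s : term I d) (t t' : term (Pob Q d) e) :
  teq _ e t t' -> teq (CompInst I Q) e (tens I Q s t) (tens I Q s t').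
Proof.
  intro H. rewrite !tens_emb. apply emb_teq. apply Ppath_teq; auto.
Qed.

Lemma tens_cong_l {d} (s s' : term I d) : teq I d s s' ->
  forall e (t : term (Pob Q d) e), teq (CompInst I Q) e (tens I Q s t) (tens I Q s' t).
Proof.
  intro H. induction H; intros e0 t0.
  - destruct t0 as [q k].
    change (existT (fun x => Path E (gsort (Pob Q (ieq_sort I e)) x) e0) q k)
      with (tcat (gterm (Pob Q (ieq_sort I e)) q) k).
    rewrite !tens_tcat_r. apply teq_tcat.
    exact (teq_ax (CompInst I Q) (inl (existT _ e q))).
  - apply teq_refl.
  - apply teq_sym; auto.
  - eapply teq_trans; eauto.
  - rewrite !tens_tcat_l. auto.
  - rewrite !tens_tcat_l. apply tens_cong_r. apply Ppath_peq; auto. apply peq_ax.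
Qed.

Lemma tens_cong {d e} (s s' : term I d) (t t' : term (Pob Q d) e) :
  teq I d s s' -> teq _ e t t' -> teq (CompInst I Q) e (tens I Q s t) (tens I Q s' t').
Proof.
  intros H1 H2. eapply teq_trans. apply tens_cong_l; eauto. apply tens_cong_r; auto.
Qed.
End Tens.

Section CC.
Context {C D E : CatPres} (P : Curr C D) (Q : Curr D E).

Lemma comp_pmor_tens f {d e} (s : term (Pob P (fcod C f)) d) (t : term (Pob Q d) e) :
  tapp (Pmor (CompCurr P Q) f) (tens _ Q s t) = tens _ Q (tapp (Pmor P f) s) t.
Proof.
  destruct s as [x g]. rewrite (tens_emb _ _ (existT _ x g)).
  change (tapp (Pmor P f) (existT _ x g)) with (tcat (Pmor P f x) g).
  rewrite tens_tcat_l. cbn [projT2 projT1].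
  generalize (tapp (Ppath Q g) t). intros [q k].
  exact (eq_sym (tens_tcat_r _ Q (Pmor P f x) (gterm _ q) k)).
Qed.

Lemma comp_ppath_tens {c c'} (p : Path C c c') {d e} (s : term (Pob P c') d) (t : term (Pob Q d) e) :
  tapp (Ppath (CompCurr P Q) p) (tens _ Q s t) = tens _ Q (tapp (Ppath P p) s) t.
Proof.
  induction p as [x|f c' p IH]; simpl.
  - rewrite !tapp_mid. reflexivity.
  - rewrite !tapp_mcomp. rewrite IH. apply comp_pmor_tens.
Qed.

Lemma comp_is_curr : is_curr P -> is_curr Q -> is_curr (CompCurr P Q).
Proof.
  intros HP HQ. split.
  - intros f [[e q]|[p e']].
    + change (teq (CompInst (Pob P (fdom C f)) Q) (gsort (Pob Q (ieq_sort _ e)) q)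
        (tapp (Pmor (CompCurr P Q) f) (tens _ Q (ieq_lhs _ e) (gterm _ q)))
        (tapp (Pmor (CompCurr P Q) f) (tens _ Q (ieq_rhs _ e) (gterm _ q)))).
      rewrite !comp_pmor_tens. apply tens_cong_l; auto. apply HP.
    + change (teq (CompInst (Pob P (fdom C f)) Q) (ieq_sort (Pob Q (gsort _ p)) e')
        (tapp (Pmor (CompCurr P Q) f) (tens _ Q (gterm _ p) (ieq_lhs _ e')))
        (tapp (Pmor (CompCurr P Q) f) (tens _ Q (gterm _ p) (ieq_rhs _ e')))).
      rewrite !comp_pmor_tens. apply tens_cong_r; auto. apply teq_ax.
  - intros e [p q]. rewrite <- (tapp_gterm (Ppath (CompCurr P Q) (ceq_lhs C e))).
    rewrite <- (tapp_gterm (Ppath (CompCurr P Q) (ceq_rhs C e))).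
    change (gterm (Pob (CompCurr P Q) (ceq_tgt C e)) (existT _ p q))
      with (tens _ Q (gterm _ p) (gterm _ q)).
    rewrite !comp_ppath_tens. apply tens_cong_l; auto. apply Ppath_peq; auto. apply peq_ax.
Qed.
End CC.

Lemma crel_equiv {C D E : CatPres} (P : Prof C D) (Q : Prof D E) c e : equivR (CompRel P Q c e).
Proof. split; unfold CompRel; eauto using clos_refl_sym_trans. Qed.

Lemma lift_crel {C D E : CatPres} (P : Prof C D) (Q : Prof D E) c e {X} (F : _ -> X) :
  (forall w w', CompStep P Q c e w w' -> F w = F w') ->
  forall w w', CompRel P Q c e w w' -> F w = F w'.
Proof.
  intros H w w' R. induction R; auto. congruence.
Qed.

Lemma lift_crel_rep {C D E : CatPres} (P : Prof C D) (Q : Prof D E) c e {X} (F : _ -> X) :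
  (forall w w', CompStep P Q c e w w' -> F w = F w') ->
  forall w, F (rep (cls (CompRel P Q c e) w)) = F w.
Proof.
  intros H w. apply (lift_crel P Q c e F H). apply rep_cls. apply crel_equiv.
Qed.

Section Mu.
Context {C D E : CatPres} (P : Curr C D) (Q : Curr D E) (HP : is_curr P) (HQ : is_curr Q).

Lemma mu_cls c e w :
  mu P Q c e (cls (CompRel (SemProf P) (SemProf Q) c e) w) =
  cls (teq (Pob (CompCurr P Q) c) e) (tens _ Q (rep (fst (projT2 w))) (rep (snd (projT2 w)))).
Proof.
  unfold mu. apply (lift_crel_rep (SemProf P) (SemProf Q) c e
    (fun w => cls (teq (Pob (CompCurr P Q) c) e) (tens _ Q (rep (fst (projT2 w))) (rep (snd (projT2 w)))))).
  intros w1 w2 St. destruct St as [d d' g p q'].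
  apply cls_eq. apply teq_equiv. cbn [projT2 fst snd].
  change (lact (SemProf Q) g q') with (cls (teq (Pob Q d) e) (tapp (Ppath Q (rep g)) (rep q'))).
  change (ract (SemProf P) g p) with (cls (teq (Pob P c) d') (tcat (rep p) (rep g))).
  eapply teq_trans. apply tens_cong_r; auto. apply rep_cls, teq_equiv.
  rewrite <- tens_tcat_l. apply tens_cong_l; auto. apply teq_sym. apply rep_cls, teq_equiv.
Qed.

Lemma mu_pcls c d e (s : term (Pob P c) d) (t : term (Pob Q d) e) :
  mu P Q c e (pcls (SemProf P) (SemProf Q) (cls (teq (Pob P c) d) s) (cls (teq (Pob Q d) e) t))
  = cls (teq (Pob (CompCurr P Q) c) e) (tens (Pob P c) Q s t).
Proof.
  unfold pcls. rewrite mu_cls. apply cls_eq. apply teq_equiv. cbn [projT2 fst snd].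
  apply tens_cong; auto; apply rep_cls, teq_equiv.
Qed.
End Mu.

Lemma nat_inv {C D : CatPres} {P Q : Prof C D} (f : ProfMor P Q) (g : ProfMor Q P) :
  is_nat f -> (forall c d x, g c d (f c d x) = x) -> (forall c d y, f c d (g c d y) = y) -> is_nat g.
Proof.
  intros [H1 H2] gf fg. split.
  - intros c c' d h y. rewrite <- (fg c' d y) at 1. rewrite <- H1. apply gf.
  - intros c d d' h y. rewrite <- (fg c d y) at 1. rewrite <- H2. apply gf.
Qed.

Lemma iso_of {C D : CatPres} {P Q : Prof C D} (f : ProfMor P Q) (g : ProfMor Q P) :
  is_nat f -> (forall c d x, g c d (f c d x) = x) -> (forall c d y, f c d (g c d y) = y) -> is_iso f.
Proof.
  intros H gf fg. split; auto. exists g. split; auto. apply (nat_inv f g); auto.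
Qed.

Section MuIso.
Context {C D E : CatPres} (P : Curr C D) (Q : Curr D E) (HP : is_curr P) (HQ : is_curr Q).

Lemma mu_rep c e z :
  mu P Q c e z = cls _ (tens _ Q (rep (fst (projT2 (rep z)))) (rep (snd (projT2 (rep z))))).
Proof.
  transitivity (mu P Q c e (cls _ (rep z))). f_equal; symmetry; apply cls_rep.
  apply mu_cls; auto.
Qed.

Lemma mu_nat : is_nat (mu P Q).
Proof.
  split.
  - intros c c' e f z. rewrite (mu_rep c' e z).
    change (lact (ProfComp (SemProf P) (SemProf Q)) f z) with
      (cls (CompRel (SemProf P) (SemProf Q) c e) (existT _ (projT1 (rep z))
         (lact (SemProf P) f (fst (projT2 (rep z))), snd (projT2 (rep z))))).
    rewrite mu_cls by auto. cbn [projT2 fst snd].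
    set (s := rep (fst (projT2 (rep z)))). set (t := rep (snd (projT2 (rep z)))).
    change (lact (SemProf (CompCurr P Q)) f (cls (teq (Pob (CompCurr P Q) c') e) (tens _ Q s t)))
      with (cls (teq (Pob (CompCurr P Q) c) e)
              (tapp (Ppath (CompCurr P Q) (rep f)) (rep (cls (teq (Pob (CompCurr P Q) c') e) (tens _ Q s t))))).
    change (lact (SemProf P) f (fst (projT2 (rep z)))) with
      (cls (teq (Pob P c) _) (tapp (Ppath P (rep f)) s)).
    apply cls_eq. apply teq_equiv.
    eapply teq_trans. apply tens_cong_l; auto. apply rep_cls, teq_equiv.
    rewrite <- comp_ppath_tens. apply Ppath_teq. apply comp_is_curr; auto.
    apply teq_sym, rep_cls, teq_equiv.
  - intros c e e' h z. rewrite (mu_rep c e z).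
    change (ract (ProfComp (SemProf P) (SemProf Q)) h z) with
      (cls (CompRel (SemProf P) (SemProf Q) c e') (existT _ (projT1 (rep z))
         (fst (projT2 (rep z)), ract (SemProf Q) h (snd (projT2 (rep z)))))).
    rewrite mu_cls by auto. cbn [projT2 fst snd].
    set (s := rep (fst (projT2 (rep z)))). set (t := rep (snd (projT2 (rep z)))).
    change (ract (SemProf (CompCurr P Q)) h (cls (teq (Pob (CompCurr P Q) c) e) (tens _ Q s t)))
      with (cls (teq (Pob (CompCurr P Q) c) e')
              (tcat (rep (cls (teq (Pob (CompCurr P Q) c) e) (tens _ Q s t))) (rep h))).
    change (ract (SemProf Q) h (snd (projT2 (rep z)))) with
      (cls (teq (Pob Q _) e') (tcat t (rep h))).
    apply cls_eq. apply teq_equiv.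
    eapply teq_trans. apply tens_cong_r; auto. apply rep_cls, teq_equiv.
    rewrite tens_tcat_r. apply teq_tcat.
    apply teq_sym, rep_cls, teq_equiv.
Qed.

Definition inv_t c e (w : term (Pob (CompCurr P Q) c) e) : pobj (ProfComp (SemProf P) (SemProf Q)) c e :=
  pcls (SemProf P) (SemProf Q)
    (cls (teq (Pob P c) _) (gterm _ (projT1 (projT1 w))))
    (cls (teq (Pob Q (gsort (Pob P c) (projT1 (projT1 w)))) e)
       (existT (fun y => Path E (gsort (Pob Q (gsort (Pob P c) (projT1 (projT1 w)))) y) e)
          (projT2 (projT1 w)) (projT2 w))).

Lemma inv_tens c d e (s : term (Pob P c) d) (t : term (Pob Q d) e) :
  inv_t c e (tens _ Q s t) = pcls (SemProf P) (SemProf Q) (cls _ s) (cls _ t).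
Proof.
  destruct s as [x g]. rewrite tens_emb. cbn [projT1 projT2].
  set (u := tapp (Ppath Q g) t).
  change (inv_t c e (emb (Pob P c) Q x u)) with
    (pcls (SemProf P) (SemProf Q) (cls (teq (Pob P c) _) (gterm _ x))
       (cls (teq (Pob Q (gsort (Pob P c) x)) e) (existT _ (projT1 u) (projT2 u)))).
  rewrite sigT_eta.
  assert (E1 : cls (teq (Pob Q _) e) u = lact (SemProf Q) (cls _ g) (cls (teq (Pob Q d) e) t)).
  { change (lact (SemProf Q) (cls _ g) (cls (teq (Pob Q d) e) t)) with
      (cls (teq (Pob Q _) e) (tapp (Ppath Q (rep (cls (peq D _ _) g))) (rep (cls (teq (Pob Q d) e) t)))).
    apply cls_eq. apply teq_equiv.
    eapply teq_trans. apply Ppath_teq; auto. apply teq_sym, rep_cls, teq_equiv.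
    apply Ppath_peq; auto. apply peq_sym, rep_cls, peq_equiv. }
  assert (E2 : cls (teq (Pob P c) d) (existT _ x g) = ract (SemProf P) (cls _ g) (cls _ (gterm _ x))).
  { change (ract (SemProf P) (cls _ g) (cls (teq (Pob P c) _) (gterm _ x))) with
      (cls (teq (Pob P c) d) (tcat (rep (cls (teq (Pob P c) _) (gterm _ x))) (rep (cls (peq D _ _) g)))).
    apply cls_eq. apply teq_equiv.
    change (existT _ x g) with (tcat (gterm (Pob P c) x) g).
    eapply teq_trans. apply teq_tcat. apply teq_sym, rep_cls, teq_equiv.
    apply teq_peq. apply peq_sym, rep_cls, peq_equiv. }
  rewrite E1, E2. unfold pcls. apply cls_eq. apply crel_equiv.
  apply rst_step. apply cstep.
Qed.
End MuIso.

Section MuIso2.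
Context {C D E : CatPres} (P : Curr C D) (Q : Curr D E) (HP : is_curr P) (HQ : is_curr Q).

Lemma inv_wd c e (w w' : term (Pob (CompCurr P Q) c) e) :
  teq _ e w w' -> forall e' (k : Path E e e'), inv_t P Q c e' (tcat w k) = inv_t P Q c e' (tcat w' k).
Proof.
  intro H. induction H as [ex|d t|d s t H IH|d s t u H1 IH1 H2 IH2|f s t H IH|ex t]; intros e' k.
  - destruct ex as [[ex q]|[p ex]].
    + change (inv_t P Q c e' (@tcat E (CompInst (Pob P c) Q) _ _ (tens _ Q (ieq_lhs _ ex) (gterm _ q)) k) =
              inv_t P Q c e' (@tcat E (CompInst (Pob P c) Q) _ _ (tens _ Q (ieq_rhs _ ex) (gterm _ q)) k)).
      rewrite <- !tens_tcat_r. rewrite !inv_tens by auto. f_equal.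
      apply cls_eq. apply teq_equiv. apply teq_ax.
    + change (inv_t P Q c e' (@tcat E (CompInst (Pob P c) Q) _ _ (tens _ Q (gterm _ p) (ieq_lhs _ ex)) k) =
              inv_t P Q c e' (@tcat E (CompInst (Pob P c) Q) _ _ (tens _ Q (gterm _ p) (ieq_rhs _ ex)) k)).
      rewrite <- !tens_tcat_r. rewrite !inv_tens by auto. f_equal.
      apply cls_eq. apply teq_equiv. apply teq_tcat. apply teq_ax.
  - reflexivity.
  - symmetry; auto.
  - etransitivity; eauto.
  - rewrite !tcat_tcat. apply IH.
  - rewrite !tcat_tcat. destruct t as [[p q] k0].
    change (pcls (SemProf P) (SemProf Q) (cls (teq (Pob P c) _) (gterm _ p))
              (cls (teq (Pob Q _) e') (tcat (existT (fun y => Path E (gsort (Pob Q _) y) _) q k0)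
                  (pcat (ceq_lhs E ex) k))) =
            pcls (SemProf P) (SemProf Q) (cls (teq (Pob P c) _) (gterm _ p))
              (cls (teq (Pob Q _) e') (tcat (existT (fun y => Path E (gsort (Pob Q _) y) _) q k0)
                  (pcat (ceq_rhs E ex) k)))).
    f_equal. apply cls_eq. apply teq_equiv. rewrite <- !tcat_tcat. apply teq_tcat. apply teq_deq.
Qed.

Definition muinv : ProfMor (SemProf (CompCurr P Q)) (ProfComp (SemProf P) (SemProf Q)) :=
  fun c e y => inv_t P Q c e (rep y).

Lemma muinv_cls c e w : muinv c e (cls _ w) = inv_t P Q c e w.
Proof.
  unfold muinv.
  pose proof (inv_wd c e (rep (cls (teq (Pob (CompCurr P Q) c) e) w)) w
    (rep_cls (teq_equiv _ _) w) e (gnil e)) as H.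
  rewrite !tcat_nil in H. exact H.
Qed.

Lemma mu_muinv c e y : mu P Q c e (muinv c e y) = y.
Proof.
  destruct (quot_ex y) as [w ->]. rewrite muinv_cls.
  destruct w as [[p q] k]. unfold inv_t. cbn [projT1 projT2].
  rewrite mu_pcls by auto. rewrite tens_gterm. reflexivity.
Qed.

Lemma muinv_mu c e z : muinv c e (mu P Q c e z) = z.
Proof.
  rewrite mu_rep by auto. rewrite muinv_cls. rewrite inv_tens by auto.
  rewrite !cls_rep. unfold pcls. rewrite <- surjective_pairing, sigT_eta. apply cls_rep.
Qed.

Lemma mu_iso : is_iso (mu P Q).
Proof.
  apply (iso_of _ muinv). apply mu_nat; auto. apply muinv_mu. apply mu_muinv.
Qed.

Lemma muinv_nat : is_nat muinv.
Proof. apply (nat_inv (mu P Q)). apply mu_nat; auto. apply muinv_mu. apply mu_muinv. Qed.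
End MuIso2.

Section Natur.
Context {C D E : CatPres} (P P' : Curr C D) (Q Q' : Curr D E) (phi : CurrMor P P') (psi : CurrMor Q Q')
  (HP : is_curr P) (HP' : is_curr P') (HQ : is_curr Q) (HQ' : is_curr Q')
  (Hphi : is_curr_mor phi) (Hpsi : is_curr_mor psi).

Lemma psi_path d d' (g : Path D d d') e (t : term (Pob Q d') e) :
  teq _ e (tapp (psi d) (tapp (Ppath Q g) t)) (tapp (Ppath Q' g) (tapp (psi d') t)).
Proof.
  induction g as [x|f c' g IH]; simpl.
  - rewrite !tapp_mid. apply teq_refl.
  - rewrite !tapp_mcomp. rewrite <- (tapp_mcomp (psi (fdom D f)) (Pmor Q f)).
    eapply teq_trans. apply tapp_mor_equiv. apply Hpsi.
    rewrite tapp_mcomp. apply tapp_teq. apply HQ'. apply IH.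
Qed.

Lemma CM_emb c x e (u : term (Pob Q (gsort (Pob P c) x)) e) :
  tapp (CompMor phi psi c) (emb (Pob P c) Q x u) = tens _ Q' (phi c x) (tapp (psi _) u).
Proof.
  destruct u as [q k].
  exact (eq_sym (tens_tcat_r _ Q' (phi c x) (psi _ q) k)).
Qed.

Lemma CM_tens c d e (s : term (Pob P c) d) (t : term (Pob Q d) e) :
  teq _ e (tapp (CompMor phi psi c) (tens _ Q s t)) (tens _ Q' (tapp (phi c) s) (tapp (psi d) t)).
Proof.
  destruct s as [x g]. rewrite (tens_emb _ _ (existT _ x g)). cbn [projT1 projT2].
  rewrite CM_emb.
  change (tapp (phi c) (existT _ x g)) with (tcat (phi c x) g). rewrite tens_tcat_l.
  apply tens_cong_r; auto. apply psi_path.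
Qed.

Lemma CM_teq c e (w w' : term (Pob (CompCurr P Q) c) e) :
  teq _ e w w' -> teq _ e (tapp (CompMor phi psi c) w) (tapp (CompMor phi psi c) w').
Proof.
  intro H. induction H as [ex| | | |f s t H IH|ex t].
  - destruct ex as [[ex q]|[p ex]].
    + change (teq (Pob (CompCurr P' Q') c) (gsort (Pob Q (ieq_sort _ ex)) q)
        (tapp (CompMor phi psi c) (tens _ Q (ieq_lhs _ ex) (gterm _ q)))
        (tapp (CompMor phi psi c) (tens _ Q (ieq_rhs _ ex) (gterm _ q)))).
      eapply teq_trans. apply CM_tens. eapply teq_trans. 2: apply teq_sym, CM_tens.
      apply tens_cong_l; auto. apply (proj1 Hphi c).
    + change (teq (Pob (CompCurr P' Q') c) (ieq_sort (Pob Q (gsort _ p)) ex)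
        (tapp (CompMor phi psi c) (tens _ Q (gterm _ p) (ieq_lhs _ ex)))
        (tapp (CompMor phi psi c) (tens _ Q (gterm _ p) (ieq_rhs _ ex)))).
      eapply teq_trans. apply CM_tens. eapply teq_trans. 2: apply teq_sym, CM_tens.
      apply tens_cong_r; auto. apply (proj1 Hpsi).
  - apply teq_refl.
  - apply teq_sym; auto.
  - eapply teq_trans; eauto.
  - rewrite !tapp_tcat. apply teq_rcat; auto.
  - rewrite !tapp_tcat. apply teq_deq.
Qed.

Lemma part2 c e (z : pobj (ProfComp (SemProf P) (SemProf Q)) c e) :
  SemMor (CompMor phi psi) c e (mu P Q c e z)
  = mu P' Q' c e (hcompMor (SemMor phi) (SemMor psi) c e z).
Proof.
  rewrite (mu_rep P Q) by auto.
  change (hcompMor (SemMor phi) (SemMor psi) c e z) with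
    (cls (CompRel (SemProf P') (SemProf Q') c e) (existT _ (projT1 (rep z))
      (SemMor phi c _ (fst (projT2 (rep z))), SemMor psi _ e (snd (projT2 (rep z)))))).
  rewrite mu_cls by auto. cbn [projT2 fst snd].
  set (s := rep (fst (projT2 (rep z)))). set (t := rep (snd (projT2 (rep z)))).
  unfold SemMor at 1.
  change (SemMor phi c _ (fst (projT2 (rep z)))) with (cls (teq (Pob P' c) _) (tapp (phi c) s)).
  change (SemMor psi _ e (snd (projT2 (rep z)))) with (cls (teq (Pob Q' _) e) (tapp (psi _) t)).
  apply cls_eq. apply teq_equiv.
  eapply teq_trans. apply CM_teq. apply rep_cls, teq_equiv.
  eapply teq_trans. apply CM_tens.
  apply tens_cong; auto; apply teq_sym, rep_cls, teq_equiv.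
Qed.
End Natur.

Lemma fin_sigT {A} {B : A -> Type} : finite_type A -> (forall a, finite_type (B a)) -> finite_type {a & B a}.
Proof.
  intros [lA HlA] HB.
  assert (K : forall L, exists l, forall x : sigT B, In (projT1 x) L -> In x l).
  { induction L as [|a L [l Hl]].
    - exists nil; intros x [].
    - destruct (HB a) as [la Hla]. exists (map (existT B a) la ++ l).
      intros [a' b] Hin. simpl in Hin. destruct Hin as [<-|Hin].
      + apply in_or_app; left; apply in_map; auto.
      + apply in_or_app; right; apply (Hl (existT _ a' b)); auto. }
  destruct (K lA) as [l Hl]. exists l. intros x. apply Hl, HlA.
Qed.

Lemma fin_sum {A B} : finite_type A -> finite_type B -> finite_type (A + B).
Proof.
  intros [la Ha] [lb Hb]. exists (map inl la ++ map inr lb).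
  intros [x|x]; apply in_or_app; [left|right]; apply in_map; auto.
Qed.

Lemma part3 {C D E : CatPres} (P : Curr C D) (Q : Curr D E) :
  finite_curr P -> finite_curr Q -> finite_curr (CompCurr P Q).
Proof.
  intros [HC [HD HPc]] [_ [HE HQd]]. split; auto. split; auto. intros c. split.
  - simpl. unfold CGen. apply fin_sigT. apply (HPc c). intros; apply HQd.
  - simpl. unfold CIeq. apply fin_sum; apply fin_sigT; try apply (HPc c); intros; apply HQd.
Qed.

Section HC.
Context {C D E : CatPres} (PP PP' : Prof C D) (QQ QQ' : Prof D E).

Lemma hcomp_cls (al : ProfMor PP PP') (be : ProfMor QQ QQ') : is_nat al -> is_nat be ->
  forall c e w, hcompMor al be c e (cls (CompRel PP QQ c e) w) =
    cls (CompRel PP' QQ' c e) (existT _ (projT1 w) (al c _ (fst (projT2 w)), be _ e (snd (projT2 w)))).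
Proof.
  intros Hal Hbe c e w. unfold hcompMor.
  apply (lift_crel_rep PP QQ c e
    (fun w => cls (CompRel PP' QQ' c e) (existT _ (projT1 w) (al c _ (fst (projT2 w)), be _ e (snd (projT2 w)))))).
  intros w1 w2 St. destruct St as [d d' g p q']. cbn [projT1 projT2 fst snd].
  rewrite (proj1 Hbe), (proj2 Hal). apply cls_eq. apply crel_equiv. apply rst_step. apply cstep.
Qed.

Lemma pc_lact_cls : is_prof PP -> forall c c' e (f : Hom C c c') w,
  lact (ProfComp PP QQ) f (cls (CompRel PP QQ c' e) w) =
  cls (CompRel PP QQ c e) (existT _ (projT1 w) (lact PP f (fst (projT2 w)), snd (projT2 w))).
Proof.
  intros HPP c c' e f w. simpl.
  apply (lift_crel_rep PP QQ c' e
    (fun w => cls (CompRel PP QQ c e) (existT _ (projT1 w) (lact PP f (fst (projT2 w)), snd (projT2 w))))).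
  intros w1 w2 St. destruct St as [d d' g p q']. cbn [projT1 projT2 fst snd].
  destruct HPP as [_ [_ [_ [_ Hc]]]]. rewrite Hc.
  apply cls_eq. apply crel_equiv. apply rst_step. apply cstep.
Qed.

Lemma pc_ract_cls : is_prof QQ -> forall c e e' (h : Hom E e e') w,
  ract (ProfComp PP QQ) h (cls (CompRel PP QQ c e) w) =
  cls (CompRel PP QQ c e') (existT _ (projT1 w) (fst (projT2 w), ract QQ h (snd (projT2 w)))).
Proof.
  intros HQQ c e e' h w. simpl.
  apply (lift_crel_rep PP QQ c e
    (fun w => cls (CompRel PP QQ c e') (existT _ (projT1 w) (fst (projT2 w), ract QQ h (snd (projT2 w)))))).
  intros w1 w2 St. destruct St as [d d' g p q']. cbn [projT1 projT2 fst snd].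
  destruct HQQ as [_ [_ [_ [_ Hc]]]]. rewrite <- Hc.
  apply cls_eq. apply crel_equiv. apply rst_step. apply cstep.
Qed.
End HC.

Lemma hcomp_nat {C D E : CatPres} (PP PP' : Prof C D) (QQ QQ' : Prof D E)
  (al : ProfMor PP PP') (be : ProfMor QQ QQ') : is_nat al -> is_nat be ->
  is_prof PP' -> is_prof QQ' -> is_nat (hcompMor al be).
Proof.
  intros Hal Hbe HP' HQ'. split.
  - intros c c' e f z.
    change (lact (ProfComp PP QQ) f z) with
      (cls (CompRel PP QQ c e) (existT _ (projT1 (rep z))
         (lact PP f (fst (projT2 (rep z))), snd (projT2 (rep z))))).
    rewrite hcomp_cls by auto. cbn [projT1 projT2 fst snd]. rewrite (proj1 Hal).
    change (hcompMor al be c' e z) with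
      (cls (CompRel PP' QQ' c' e) (existT _ (projT1 (rep z))
         (al c' _ (fst (projT2 (rep z))), be _ e (snd (projT2 (rep z)))))).
    rewrite pc_lact_cls by auto. reflexivity.
  - intros c e e' h z.
    change (ract (ProfComp PP QQ) h z) with
      (cls (CompRel PP QQ c e') (existT _ (projT1 (rep z))
         (fst (projT2 (rep z)), ract QQ h (snd (projT2 (rep z)))))).
    rewrite hcomp_cls by auto. cbn [projT1 projT2 fst snd]. rewrite (proj2 Hbe).
    change (hcompMor al be c e z) with
      (cls (CompRel PP' QQ' c e) (existT _ (projT1 (rep z))
         (al c _ (fst (projT2 (rep z))), be _ e (snd (projT2 (rep z)))))).
    rewrite pc_ract_cls by auto. reflexivity.
Qed.

Lemma hcomp_inv {C D E : CatPres} (PP PP' : Prof C D) (QQ QQ' : Prof D E)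
  (al : ProfMor PP PP') (be : ProfMor QQ QQ') (al' : ProfMor PP' PP) (be' : ProfMor QQ' QQ) :
  is_nat al -> is_nat be -> (forall c d x, al c d (al' c d x) = x) -> (forall c d x, be c d (be' c d x) = x) ->
  forall c e x, hcompMor al be c e (hcompMor al' be' c e x) = x.
Proof.
  intros Hal Hbe e1 e2 c e x.
  change (hcompMor al' be' c e x) with
      (cls (CompRel PP QQ c e) (existT _ (projT1 (rep x))
         (al' c _ (fst (projT2 (rep x))), be' _ e (snd (projT2 (rep x)))))).
  rewrite hcomp_cls by auto. cbn [projT1 projT2 fst snd]. rewrite e1, e2.
  rewrite <- surjective_pairing, sigT_eta. apply cls_rep.
Qed.

Lemma part4 {C D E : CatPres} (PP : Prof C D) (QQ : Prof D E) :
  is_prof PP -> is_prof QQ -> fin_curr_presentable PP -> fin_curr_presentable QQ ->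
  fin_curr_presentable (ProfComp PP QQ).
Proof.
  intros HPP HQQ [R [HR [FR [eta Heta]]]] [S [HS [FS [th Hth]]]].
  exists (CompCurr R S). split. apply comp_is_curr; auto. split. apply part3; auto.
  destruct Heta as [Hneta [eta' [Hneta' [ea eb]]]].
  destruct Hth as [Hnth [th' [Hnth' [ta tb]]]].
  exists (fun c e y => hcompMor eta th c e (muinv R S c e y)).
  apply (iso_of _ (fun c e x => mu R S c e (hcompMor eta' th' c e x))).
  - pose proof (muinv_nat R S HR HS) as [M1 M2].
    pose proof (hcomp_nat _ _ _ _ eta th Hneta Hnth HPP HQQ) as [N1 N2].
    split; intros; [rewrite M1, N1 | rewrite M2, N2]; reflexivity.
  - intros c e y. rewrite hcomp_inv; auto. apply mu_muinv; auto.
  - intros c e x. rewrite muinv_mu by auto. apply hcomp_inv; auto.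
Qed.
Theorem mainTheorem10 (C D E : CatPres) :
  (forall (P : Curr C D) (Q : Curr D E), is_curr P -> is_curr Q ->
     is_curr (CompCurr P Q) /\
     (forall c d e (s : term (Pob P c) d) (t : term (Pob Q d) e),
        mu P Q c e (pcls (SemProf P) (SemProf Q) (cls (teq (Pob P c) d) s)
                                                 (cls (teq (Pob Q d) e) t))
        = cls (teq (Pob (CompCurr P Q) c) e) (tens (Pob P c) Q s t)) /\
     is_iso (mu P Q)) /\
  (forall (P P' : Curr C D) (Q Q' : Curr D E) (phi : CurrMor P P') (psi : CurrMor Q Q'),
     is_curr P -> is_curr P' -> is_curr Q -> is_curr Q' ->
     is_curr_mor phi -> is_curr_mor psi ->
     forall c e (z : pobj (ProfComp (SemProf P) (SemProf Q)) c e),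
       SemMor (CompMor phi psi) c e (mu P Q c e z)
       = mu P' Q' c e (hcompMor (SemMor phi) (SemMor psi) c e z)) /\
  (forall (P : Curr C D) (Q : Curr D E),
     finite_curr P -> finite_curr Q -> finite_curr (CompCurr P Q)) /\
  (forall (PP : Prof C D) (QQ : Prof D E),
     is_prof PP -> is_prof QQ ->
     fin_curr_presentable PP -> fin_curr_presentable QQ ->
     fin_curr_presentable (ProfComp PP QQ)).
Proof.
  split.
  - intros P Q HP HQ. split. apply comp_is_curr; auto. split.
    + intros; apply mu_pcls; auto.
    + apply mu_iso; auto.
  - split. intros; apply part2; auto.
    split. intros; apply part3; auto.
    intros; apply part4; auto.
Qed.
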